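(* Let $n,m\ge 1$ be integers, $x_0<x_1<\dots<x_n$, $y_0<y_1<\dots<y_m$ real numbers and $z_{ij}\in\mathbf{R}$ for $0\le i\le n$, $0\le j\le m$. Put $I_{x_i}=[x_{i-1},x_i]$, $I_{y_j}=[y_{j-1},y_j]$, $I_x=[x_0,x_n]$, $I_y=[y_0,y_m]$, $E_{ij}=I_{x_i}\times I_{y_j}$, $E=I_x\times I_y$ and $N_{nm}=\{1,\dots,n\}\times\{1,\dots,m\}$. For $(i,j)\in N_{nm}$ let $L_{x_i}:I_x\to I_{x_i}$ and $L_{y_j}:I_y\to I_{y_j}$ be contraction homeomorphisms mapping the endpoints $\{x_0,x_n\}$ onto $\{x_{i-1},x_i\}$ and $\{y_0,y_m\}$ onto $\{y_{j-1},y_j\}$ respectively, and let $L_{ij}(x,y)=(L_{x_i}(x),L_{y_j}(y))$, $L_{ij}:E\to E_{ij}$. Let $q_\alpha:\{x_\alpha\}\times I_y\to\mathbf{R}$ ($\alpha=0,\dots,n$) be continuous functions with $q_\alpha(x_\alpha,y_l)=z_{\alpha l}$ for $l=0,\dots,m$, and $r_\beta:I_x\times\{y_\beta\}\to\mathbf{R}$ ($\beta=0,\dots,m$) be continuous functions with $r_\beta(x_k,y_\beta)=z_{k\beta}$ for $k=0,\dots,n$. For each $(i,j)\in N_{nm}$ let: - $s_{ij}:E_{ij}\to\mathbf{R}$ be a Lipschitz function with $|s_{ij}(x,y)|<1$ on $E_{ij}$ and $s_{ij}(x_{i-1},y)=s_{ij}(x_i,y)=0$ for $y\in I_{y_j}$,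 $s_{ij}(x,y_{j-1})=s_{ij}(x,y_j)=0$ for $x\in I_{x_i}$; - $g_{ij}:E\to\mathbf{R}$ be any Lipschitz function; - $h_{ij}:E_{ij}\to\mathbf{R}$ be a Lipschitz function with $h_{ij}=q_{i-1}$ on $\{x_{i-1}\}\times I_{y_j}$, $h_{ij}=q_i$ on $\{x_i\}\times I_{y_j}$, $h_{ij}=r_{j-1}$ on $I_{x_i}\times\{y_{j-1}\}$, $h_{ij}=r_j$ on $I_{x_i}\times\{y_j\}$; - $Q_{ij}(x,y)=-s_{ij}(L_{ij}(x,y))\,g_{ij}(x,y)+h_{ij}(L_{ij}(x,y))$ for $(x,y)\in E$; - $F_{ij}(x,y,z)=s_{ij}(L_{ij}(x,y))\,z+Q_{ij}(x,y)$ and $W_{ij}(x,y,z)=(L_{ij}(x,y),F_{ij}(x,y,z))$ for $(x,y,z)\in E\times\mathbf{R}$. Then the attractor $A$ of the iterated function system $\{W_{ij}:(i,j)\in N_{nm}\}$ is the graph of a continuous function $f:E\to\mathbf{R}$.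
   Context: The maps $W_{ij}$ are contractions with respect to the metric $\rho_\theta((x,y,z),(x',y',z'))=|x-x'|+|y-y'|+\theta|z-z'|$ on $\mathbf{R}^3$ for a suitable small $\theta>0$ (equivalent to the Euclidean metric). The attractor of the IFS is the unique nonempty compact set $A\subset E\times\mathbf{R}$ with $A=\bigcup_{(i,j)\in N_{nm}}W_{ij}(A)$. The graph of $f$ is $\{(x,y,f(x,y)):(x,y)\in E\}$. *)

(* Defs.v *)
From HB Require Import structures.
From mathcomp Require Import all_boot all_order all_algebra.
From mathcomp Require Import all_classical all_reals all_analysis.
Set Implicit Arguments. Unset Strict Implicit. Unset Printing Implicit Defensive.
Import Order.TTheory GRing.Theory Num.Theory.
Import numFieldNormedType.Exports.
Local Open Scope classical_set_scope.
Local Open Scope ring_scope.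

Section Defs.
Variable R : realType.

Definition cint (a b : R) : set R := [set t | a <= t <= b].

Definition rect (a b c d : R) : set (R * R) :=
  [set p | cint a b p.1 /\ cint c d p.2].

Definition contraction_on (A : set R) (f : R -> R) : Prop :=
  exists c : R, 0 <= c /\ c < 1 /\
    forall a b, A a -> A b -> `|f a - f b| <= c * `|a - b|.

Definition homeo_on (A B : set R) (f : R -> R) : Prop :=
  {within A, continuous f} /\
  exists g : R -> R, {within B, continuous g} /\
    (forall a, A a -> B (f a)) /\ (forall b, B b -> A (g b)) /\
    (forall a, A a -> g (f a) = a) /\ (forall b, B b -> f (g b) = b).

(* Lipschitz on a subset of R^2 (w.r.t. the l^1 metric, equivalent to the
   Euclidean one) *)
Definition lipschitz2_on (A : set (R * R)) (f : R * R -> R) : Prop :=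
  exists K : R, forall p p', A p -> A p' ->
    `|f p - f p'| <= K * (`|p.1 - p'.1| + `|p.2 - p'.2|).

Definition Lmap (Lx Ly : nat -> R -> R) (i j : nat) (p : R * R) : R * R :=
  (Lx i p.1, Ly j p.2).

Definition Qmap (Lx Ly : nat -> R -> R) (s g h : nat -> nat -> R * R -> R)
  (i j : nat) (p : R * R) : R :=
  - s i j (Lmap Lx Ly i j p) * g i j p + h i j (Lmap Lx Ly i j p).

Definition Fmap (Lx Ly : nat -> R -> R) (s g h : nat -> nat -> R * R -> R)
  (i j : nat) (w : (R * R) * R) : R :=
  s i j (Lmap Lx Ly i j w.1) * w.2 + Qmap Lx Ly s g h i j w.1.

Definition Wmap (Lx Ly : nat -> R -> R) (s g h : nat -> nat -> R * R -> R)
  (i j : nat) (w : (R * R) * R) : (R * R) * R :=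
  (Lmap Lx Ly i j w.1, Fmap Lx Ly s g h i j w).

Definition hutchinson (n m : nat) (Lx Ly : nat -> R -> R)
  (s g h : nat -> nat -> R * R -> R) (A : set ((R * R) * R)) : set ((R * R) * R) :=
  [set w | exists i j, (1 <= i <= n)%N /\ (1 <= j <= m)%N /\
     exists a, A a /\ w = Wmap Lx Ly s g h i j a].

Definition graph_on (E : set (R * R)) (f : R * R -> R) : set ((R * R) * R) :=
  [set w | E w.1 /\ w.2 = f w.1].

End Defs.

(* Main.v *)
Require Import Defs.
From HB Require Import structures.
From mathcomp Require Import all_boot all_order all_algebra.
From mathcomp Require Import all_classical all_reals all_analysis.
Import Order.TTheory GRing.Theory Num.Theory.
Import numFieldNormedType.Exports.
Local Open Scope classical_set_scope.
Local Open Scope ring_scope.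
From mathcomp Require Import ring lra zify.
Set Implicit Arguments. Unset Strict Implicit. Unset Printing Implicit Defensive.

Section H.
Variable R : realType.

Lemma within_contP (T : pseudoMetricType R) (A : set T) (f : T -> R) :
  {within A, continuous f} <->
  (forall x, A x -> forall e : R, 0 < e -> exists2 d : R, 0 < d &
     forall y, A y -> ball x d y -> `|f x - f y| < e).
Proof.
rewrite subspace_continuousP; split.
- move=> H x Ax e e0.
  have := H x Ax.
  move=> /cvgrPdist_lt /(_ e e0).
  rewrite /within /= => /nbhs_ballP [d d0 Hd].
  by exists d => // y Ay xy; exact: (Hd y xy Ay).
- move=> H x Ax.
  apply/cvgrPdist_lt => e e0. have [d d0 Hd] := H x Ax e e0.
  rewrite /within /=; apply/nbhs_ballP; exists d => // y xy Ay.
  exact: Hd.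
Qed.

Lemma ballR (a b e : R) : ball a e b = (`|a - b| < e).
Proof. by rewrite -ball_normE. Qed.
Lemma ballT3 (w w' : (R * R) * R) e : ball w e w' = ((`|w.1.1 - w'.1.1| < e /\ `|w.1.2 - w'.1.2| < e) /\ `|w.2 - w'.2| < e).
Proof. change (ball w e w') with (ball w.1 e w'.1 /\ ball w.2 e w'.2).
change (ball w.1 e w'.1) with (ball w.1.1 e w'.1.1 /\ ball w.1.2 e w'.1.2).
by rewrite !ballR. Qed.
Lemma ballRR (a b : R * R) e : ball a e b = (`|a.1 - b.1| < e /\ `|a.2 - b.2| < e).
Proof. change (ball a e b) with (ball a.1 e b.1 /\ ball a.2 e b.2). by rewrite !ballR. Qed.

Lemma ex_pow_lt (c e : R) : 0 <= c -> c < 1 -> 0 < e -> exists k, c ^+ k < e.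
Proof.
move=> c0 c1 e0.
have : `|c| < 1 by rewrite ger0_norm.
move=> /cvg_expr /cvgrPdist_lt /(_ e e0) [N _ HN].
exists N; have := HN N (leqnn N); rewrite sub0r normrN ger0_norm //.
exact: exprn_ge0.
Qed.

Lemma pow_zero (a D c : R) : 0 <= c -> c < 1 ->
  (forall k, `|a| <= D * c ^+ k) -> a = 0.
Proof.
move=> c0 c1 H; apply/eqP; apply/negPn/negP => a0.
have D0 : 0 <= D by have := H 0%N; rewrite expr0 mulr1; apply: le_trans.
have na : 0 < `|a| by rewrite normr_gt0.
have [k hk] := ex_pow_lt c0 c1 (divr_gt0 na (ltr_wpDl D0 ltr01 : 0 < D + 1)).
have := H k.
have h1 : D * c ^+ k <= (D + 1) * c ^+ k.
  by rewrite ler_wpM2r ?exprn_ge0 // lerDl.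
have h2 : (D + 1) * c ^+ k < `|a|.
  by rewrite mulrC -ltr_pdivlMr // ltr_wpDl.
move=> h3; have := le_lt_trans (le_trans h3 h1) h2; by rewrite ltxx.
Qed.

Lemma fin_min (P : nat -> R -> Prop) N :
  (forall i d d', 0 < d' -> d' <= d -> P i d -> P i d') ->
  (forall i, (i <= N)%N -> exists2 d, 0 < d & P i d) ->
  exists2 d, 0 < d & forall i, (i <= N)%N -> P i d.
Proof.
move=> Pm; elim: N => [|N IH] H.
  have [d d0 Pd] := H 0%N (leqnn 0); exists d => // i; rewrite leqn0 => /eqP ->.
  exact: Pd.
have [d d0 Pd] := IH (fun i iN => H i (leqW iN)).
have [d' d0' Pd'] := H N.+1 (leqnn _).
exists (Num.min d d'); first by rewrite lt_min d0 d0'.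
move=> i; rewrite leq_eqVlt => /orP [/eqP ->|iN].
  by apply: (Pm _ d'); rewrite ?lt_min ?d0 ?d0' // ge_min lexx orbT.
by apply: (Pm _ d); rewrite ?lt_min ?d0 ?d0' // ?ge_min ?lexx //; apply: Pd.
Qed.

Lemma fin_max (P : nat -> R -> Prop) N :
  (forall i c c', c <= c' -> P i c -> P i c') ->
  (forall i, (i <= N)%N -> exists c, 0 <= c /\ c < 1 /\ P i c) ->
  exists c, 0 <= c /\ c < 1 /\ forall i, (i <= N)%N -> P i c.
Proof.
move=> Pm; elim: N => [|N IH] H.
  have [c [c0 [c1 Pc]]] := H 0%N (leqnn 0); exists c; do 2!split => //.
  by move=> i; rewrite leqn0 => /eqP ->.
have [c [c0 [c1 Pc]]] := IH (fun i iN => H i (leqW iN)).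
have [c' [c0' [c1' Pc']]] := H N.+1 (leqnn _).
exists (Num.max c c'); split; first by rewrite le_max c0.
split; first by rewrite gt_max c1 c1'.
move=> i; rewrite leq_eqVlt => /orP [/eqP ->|iN].
  by apply: (Pm _ c'); rewrite // le_max lexx orbT.
by apply: (Pm _ c); rewrite ?le_max ?lexx //; apply: Pc.
Qed.


Lemma cont_M (T : pseudoMetricType R) (A : set T) (f g : T -> R) :
  {within A, continuous f} -> {within A, continuous g} ->
  {within A, continuous (fun p => f p * g p)}.
Proof.
rewrite !subspace_continuousP => Hf Hg x Ax.
exact: (cvgM (Hf x Ax) (Hg x Ax)).
Qed.
Lemma cont_D (T : pseudoMetricType R) (A : set T) (f g : T -> R) :
  {within A, continuous f} -> {within A, continuous g} ->
  {within A, continuous (fun p => f p + g p)}.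
Proof.
rewrite !subspace_continuousP => Hf Hg x Ax.
exact: (cvgD (Hf x Ax) (Hg x Ax)).
Qed.
Lemma cont_B (T : pseudoMetricType R) (A : set T) (f g : T -> R) :
  {within A, continuous f} -> {within A, continuous g} ->
  {within A, continuous (fun p => f p - g p)}.
Proof.
rewrite !subspace_continuousP => Hf Hg x Ax.
exact: (cvgB (Hf x Ax) (Hg x Ax)).
Qed.
Lemma hT3 : hausdorff_space ((R * R) * R)%type.
Proof. exact: norm_hausdorff. Qed.
Lemma closure_ballP (A : set ((R*R)*R)) w : (forall e : R, 0 < e -> exists a, A a /\ ball w e a) -> closure A w.
Proof.
move=> H B /nbhs_ballP [e e0 He]. have [a [Aa wa]] := H e e0. by exists a; split => //; apply: He.
Qed.
End H.

Section H2.
Variable R : realType.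

Lemma lip_cont (A : set (R * R)) (f : R * R -> R) :
  lipschitz2_on A f -> {within A, continuous f}.
Proof.
move=> [K HK]; apply/within_contP => p Ap e e0.
have K1 : 0 < `|K| + 1 by rewrite ltr_wpDl.
exists (e / (2 * (`|K| + 1))); first by rewrite divr_gt0 // mulr_gt0.
move=> p' Ap'; rewrite ballRR => -[h1 h2].
apply: (le_lt_trans (HK p p' Ap Ap')).
apply: (le_lt_trans (y := (`|K| + 1) * (`|p.1 - p'.1| + `|p.2 - p'.2|))).
  by rewrite ler_wpM2r ?addr_ge0 // (le_trans (ler_norm K)) // lerDl.
have : `|p.1 - p'.1| + `|p.2 - p'.2| < e / (2 * (`|K| + 1)) *+ 2.
  by rewrite mulr2n ltrD.
have -> : e / (2 * (`|K| + 1)) *+ 2 = e / (`|K|+1).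
  by rewrite -mulr_natr; field; rewrite lt0r_neq0.
move=> H.
by rewrite mulrC -ltr_pdivlMr.
Qed.

Lemma rect_eq (a b c d : R) : rect a b c d = `[a, b] `*` `[c, d].
Proof.
by apply/seteqP; split => p /=; rewrite /rect /cint /= !in_itv.
Qed.

Lemma rect_compact (a b c d : R) : compact (rect a b c d).
Proof. by rewrite rect_eq; apply: compact_setX; exact: segment_compact. Qed.

Lemma rect_max (a b c d : R) (f : R * R -> R) : a <= b -> c <= d ->
  {within rect a b c d, continuous f} ->
  exists2 p, rect a b c d p & forall p', rect a b c d p' -> f p' <= f p.
Proof.
move=> ab cd cf.
have ne : rect a b c d !=set0 by exists (a, c); rewrite /rect /cint /= lexx ab lexx cd.
have [p pin H] := compact_EVT_max ne (@rect_compact a b c d) cf.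
exists p; first by rewrite inE in pin.
by move=> p' Hp'; apply: H; rewrite inE.
Qed.

Lemma cont_norm (A : set (R * R)) (f : R * R -> R) :
  {within A, continuous f} -> {within A, continuous (fun p => `|f p|)}.
Proof.
move/within_contP => H; apply/within_contP => p Ap e e0.
have [d d0 Hd] := H p Ap e e0; exists d => // p' Ap' pp'.
exact: (le_lt_trans (ler_dist_dist _ _) (Hd p' Ap' pp')).
Qed.

Lemma rect_bound (a b c d : R) (f : R * R -> R) : a <= b -> c <= d ->
  {within rect a b c d, continuous f} ->
  exists M, forall p, rect a b c d p -> `|f p| <= M.
Proof.
move=> ab cd /cont_norm cf; have [p _ H] := rect_max ab cd cf.
by exists `|f p|.
Qed.
End H2.

Section H3.
Variable R : realType.
Variables (x : nat -> R) (n : nat).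
Hypothesis Hx : forall i, (i < n)%N -> x i < x i.+1.

Lemma part_lt i k : (i < k)%N -> (k <= n)%N -> x i < x k.
Proof.
elim: k => [//|k IH]; rewrite ltnS leq_eqVlt => /orP [/eqP ->|ik] kn.
  exact: Hx.
by apply: lt_trans (IH ik (ltnW kn)) (Hx kn).
Qed.

Lemma part_le i k : (i <= k)%N -> (k <= n)%N -> x i <= x k.
Proof.
rewrite leq_eqVlt => /orP [/eqP ->|ik] kn //.
exact/ltW/part_lt.
Qed.

Lemma part_cover t : (1 <= n)%N -> x 0 <= t <= x n ->
  exists i, (1 <= i <= n)%N /\ x i.-1 <= t <= x i.
Proof.
move=> n1 /andP [t0 tn].
suff H : forall N, (1 <= N)%N -> (N <= n)%N -> t <= x N ->
  exists i, (1 <= i <= N)%N /\ x i.-1 <= t <= x i.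
  by have [i [/andP [i1 iN] Hi]] := H n n1 (leqnn n) tn; exists i; rewrite i1 iN.
elim => [//|N IH] _ Nn tN.
case: (posnP N) => [N0|N0].
  by exists 1%N; rewrite /= t0; move: tN; rewrite N0.
case: (leP t (x N)) => tN'.
  have [i [/andP [i1 iN] Hi]] := IH N0 (ltnW Nn) tN'.
  by exists i; rewrite i1 (leqW iN).
by exists N.+1; rewrite /= leqnn (ltW tN') tN.
Qed.

Lemma part_overlap i i' t : (1 <= i)%N -> (i' <= n)%N -> (i < i')%N ->
  x i.-1 <= t <= x i -> x i'.-1 <= t <= x i' -> i' = i.+1 /\ t = x i.
Proof.
move=> i1 i'n ii' /andP [a1 a2] /andP [b1 b2].
case: (ltngtP i'.-1 i) => H.
- by move: ii'; case: i' {i'n b1 b2} H => // i'; rewrite ltnS /= => /leq_trans H /H; rewrite ltnn.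
- have := part_lt H (leq_trans (leq_pred _) i'n) => h; lra.
- have -> : i' = i.+1 by rewrite -H prednK // (leq_ltn_trans _ ii').
  split => //; apply/eqP; rewrite eq_le a2 /=; move: b1; by rewrite -H.
Qed.
End H3.

Section Ar.
Variable R : realType.
Lemma arith1 (a b U V : R) : a - b <= U - V -> 0 <= V -> 0 <= U -> a - V <= b + U.
Proof. lra. Qed.
Lemma arith2 (a b U V : R) : - (b - a) <= V - U -> 0 <= U -> a - V <= b + U.
Proof. lra. Qed.
Lemma arith3 (a b c : R) : a <= b + c -> b - c <= a -> `|a - b| <= c.
Proof. move=> h1 h2; apply/ler_normlP; split; lra. Qed.
Lemma arith4 (a A b B c t : R) : `|a - A| <= c -> `|A - B| < t -> `|b - B| <= c -> c < t ->
  `|a - b| < t * 3.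
Proof.
move=> /ler_normlP [h1 h2] /ltr_normlP [h3 h4] /ler_normlP [h5 h6] h7.
apply/ltr_normlP; split; lra.
Qed.
Lemma arith5 (a b c u v : R) : `|a - b| <= u -> `|c - b| <= v -> `|a - c| <= u + v.
Proof.
move=> /ler_normlP [h1 h2] /ler_normlP [h5 h6]; apply/ler_normlP; split; lra.
Qed.
Lemma arith6 (x0 xn u v : R) : x0 <= u <= xn -> x0 <= v <= xn -> `|u - v| <= xn - x0.
Proof.
move=> /andP [h1 h2] /andP [h3 h4]; apply/ler_normlP; split; lra.
Qed.
Lemma arith7 (a b u : R) : `|a| <= u -> `|b| <= u -> 0 <= u.
Proof. by move=> h _; apply: le_trans h. Qed.
Lemma arith8 (a f M C : R) : `|a| <= M -> `|f| <= C -> `|a - f| <= M + C.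
Proof.
move=> /ler_normlP [h1 h2] /ler_normlP [h5 h6]; apply/ler_normlP; split; lra.
Qed.
End Ar.

Section Main.
Variables (R : realType) (n m : nat) (x y : nat -> R) (Lx Ly gx gy : nat -> R -> R).
Variables (s g h : nat -> nat -> R * R -> R) (q r : nat -> R -> R) (cL sig : R).
Hypothesis Hn : (1 <= n)%N.
Hypothesis Hm : (1 <= m)%N.
Hypothesis Hx : forall i, (i < n)%N -> x i < x i.+1.
Hypothesis Hy : forall j, (j < m)%N -> y j < y j.+1.
Hypothesis HLx : forall i, (1 <= i <= n)%N -> forall t, cint (x 0) (x n) t -> cint (x i.-1) (x i) (Lx i t).
Hypothesis Hgx : forall i, (1 <= i <= n)%N -> forall t, cint (x i.-1) (x i) t -> cint (x 0) (x n) (gx i t).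
Hypothesis HLgx : forall i, (1 <= i <= n)%N -> forall t, cint (x i.-1) (x i) t -> Lx i (gx i t) = t.
Hypothesis HgLx : forall i, (1 <= i <= n)%N -> forall t, cint (x 0) (x n) t -> gx i (Lx i t) = t.
Hypothesis Hgxc : forall i, (1 <= i <= n)%N -> {within cint (x i.-1) (x i), continuous (gx i)}.
Hypothesis HcLx : forall i, (1 <= i <= n)%N -> forall a b, cint (x 0) (x n) a -> cint (x 0) (x n) b ->
  `|Lx i a - Lx i b| <= cL * `|a - b|.
Hypothesis HLy : forall j, (1 <= j <= m)%N -> forall t, cint (y 0) (y m) t -> cint (y j.-1) (y j) (Ly j t).
Hypothesis Hgy : forall j, (1 <= j <= m)%N -> forall t, cint (y j.-1) (y j) t -> cint (y 0) (y m) (gy j t).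
Hypothesis HLgy : forall j, (1 <= j <= m)%N -> forall t, cint (y j.-1) (y j) t -> Ly j (gy j t) = t.
Hypothesis HgLy : forall j, (1 <= j <= m)%N -> forall t, cint (y 0) (y m) t -> gy j (Ly j t) = t.
Hypothesis Hgyc : forall j, (1 <= j <= m)%N -> {within cint (y j.-1) (y j), continuous (gy j)}.
Hypothesis HcLy : forall j, (1 <= j <= m)%N -> forall a b, cint (y 0) (y m) a -> cint (y 0) (y m) b ->
  `|Ly j a - Ly j b| <= cL * `|a - b|.
Hypothesis HcL0 : 0 <= cL.
Hypothesis HcL1 : cL < 1.

Definition Erect := rect (x 0) (x n) (y 0) (y m).
Definition Eij i j := rect (x i.-1) (x i) (y j.-1) (y j).
Definition inR i j p := (1 <= i <= n)%N /\ (1 <= j <= m)%N /\ Eij i j p.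

Hypothesis Hsig0 : 0 <= sig.
Hypothesis Hsig1 : sig < 1.
Hypothesis Hsig : forall i j p, inR i j p -> `|s i j p| <= sig.
Hypothesis Hscont : forall i j, (1 <= i <= n)%N -> (1 <= j <= m)%N -> {within Eij i j, continuous (s i j)}.
Hypothesis Hhcont : forall i j, (1 <= i <= n)%N -> (1 <= j <= m)%N -> {within Eij i j, continuous (h i j)}.
Hypothesis Hgcont : forall i j, (1 <= i <= n)%N -> (1 <= j <= m)%N -> {within Erect, continuous (g i j)}.
Hypothesis Hsx : forall i j, (1 <= i <= n)%N -> (1 <= j <= m)%N -> forall t, cint (y j.-1) (y j) t ->
  s i j (x i.-1, t) = 0 /\ s i j (x i, t) = 0.
Hypothesis Hsy : forall i j, (1 <= i <= n)%N -> (1 <= j <= m)%N -> forall t, cint (x i.-1) (x i) t ->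
  s i j (t, y j.-1) = 0 /\ s i j (t, y j) = 0.
Hypothesis Hhx : forall i j, (1 <= i <= n)%N -> (1 <= j <= m)%N -> forall t, cint (y j.-1) (y j) t ->
  h i j (x i.-1, t) = q i.-1 t /\ h i j (x i, t) = q i t.
Hypothesis Hhy : forall i j, (1 <= i <= n)%N -> (1 <= j <= m)%N -> forall t, cint (x i.-1) (x i) t ->
  h i j (t, y j.-1) = r j.-1 t /\ h i j (t, y j) = r j t.

Definition Linv i j (p : R * R) := (gx i p.1, gy j p.2).
Definition phi i j (f : R * R -> R) p :=
  s i j p * (f (Linv i j p) - g i j (Linv i j p)) + h i j p.
Definition idx (p : R * R) : nat * nat :=
  match pselect (exists ij : nat * nat, inR ij.1 ij.2 p) with
  | left e => projT1 (cid e) | right _ => (0%N, 0%N) end.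
Definition T f p := phi (idx p).1 (idx p).2 f p.

Lemma coverE p : Erect p -> exists i j, inR i j p.
Proof.
case: p => a b [/= /andP[a0 an] /andP [b0 bm]].
have [i [ir Hi]] : exists i, (1 <= i <= n)%N /\ x i.-1 <= a <= x i by apply: part_cover => //; rewrite a0 an.
have [j [jr Hj]] : exists j, (1 <= j <= m)%N /\ y j.-1 <= b <= y j by apply: part_cover => //; rewrite b0 bm.
by exists i, j; do 2!split => //.
Qed.

Lemma idxP p : Erect p -> inR (idx p).1 (idx p).2 p.
Proof.
move=> /coverE Ep; rewrite /idx; case: pselect => [e|[]].
  exact: (projT2 (cid e)).
by have [i [j H]] := Ep; exists (i, j).
Qed.

Lemma edgeX i j i' j' f p : inR i j p -> inR i' j' p -> (i < i')%N ->
  phi i j f p = phi i' j' f p.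
Proof.
case: p => a b [ir [jr [/= Ha Hb]]] [ir' [jr' [/= Ha' Hb']]] ii'.
have /andP [i1 _] := ir; have /andP [_ i'n] := ir'.
have [ei ea] := part_overlap Hx i1 i'n ii' Ha Ha'.
subst i' a; rewrite /phi.
have [_ -> ] := Hsx ir jr Hb; have [_ -> ] := Hhx ir jr Hb.
have := Hsx ir' jr' Hb'; have := Hhx ir' jr' Hb'; rewrite /= => -[-> _] [-> _].
by rewrite !mul0r.
Qed.

Lemma edgeY i j j' f p : inR i j p -> inR i j' p -> (j < j')%N ->
  phi i j f p = phi i j' f p.
Proof.
case: p => a b [ir [jr [/= Ha Hb]]] [ir' [jr' [/= Ha' Hb']]] jj'.
have /andP [j1 _] := jr; have /andP [_ j'm] := jr'.
have [ej eb] := part_overlap Hy j1 j'm jj' Hb Hb'.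
subst j' b; rewrite /phi.
have [_ -> ] := Hsy ir jr Ha; have [_ -> ] := Hhy ir jr Ha.
have := Hsy ir' jr' Ha'; have := Hhy ir' jr' Ha'; rewrite /= => -[-> _] [-> _].
by rewrite !mul0r.
Qed.

Lemma phi_indep i j i' j' f p : inR i j p -> inR i' j' p ->
  phi i j f p = phi i' j' f p.
Proof.
move=> H H'; case: (ltngtP i i') => ii'.
- exact: edgeX.
- by apply/esym/edgeX.
- subst i'; case: (ltngtP j j') => jj'.
  + exact: edgeY.
  + by apply/esym/edgeY.
  + by subst j'.
Qed.

Lemma inR_E i j p : inR i j p -> Erect p.
Proof.
case: p => a b [/andP[i1 iN] [/andP[j1 jm] [/= /andP[a1 a2] /andP[b1 b2]]]].
split; apply/andP; split.
- apply: le_trans _ a1; apply: (@part_le _ _ _ Hx 0 i.-1); lia.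
- apply: le_trans a2 _; exact: (@part_le _ _ _ Hx i n iN (leqnn n)).
- apply: le_trans _ b1; apply: (@part_le _ _ _ Hy 0 j.-1); lia.
- apply: le_trans b2 _; exact: (@part_le _ _ _ Hy j m jm (leqnn m)).
Qed.

Lemma T_eq i j f p : inR i j p -> T f p = phi i j f p.
Proof.
move=> H; rewrite /T; apply: phi_indep => //; apply: idxP; exact: inR_E H.
Qed.
Lemma Linv_E i j p : inR i j p -> Erect (Linv i j p).
Proof.
case: p => a b [ir [jr [/= Ha Hb]]]; split; [exact: Hgx|exact: Hgy].
Qed.

Lemma L_Linv i j p : inR i j p -> (Lx i (Linv i j p).1, Ly j (Linv i j p).2) = p.
Proof.
case: p => a b [ir [jr [/= Ha Hb]]]; by rewrite /= HLgx // HLgy.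
Qed.

Lemma Linv_L i j p : (1 <= i <= n)%N -> (1 <= j <= m)%N -> Erect p ->
  Linv i j (Lx i p.1, Ly j p.2) = p.
Proof.
case: p => a b ir jr [/= Ha Hb]; by rewrite /Linv /= HgLx // HgLy.
Qed.

Lemma L_inR i j p : (1 <= i <= n)%N -> (1 <= j <= m)%N -> Erect p ->
  inR i j (Lx i p.1, Ly j p.2).
Proof.
case: p => a b ir jr [/= Ha Hb]; do 2!split => //; split; [exact: HLx|exact: HLy].
Qed.

Lemma comp_Linv_cont i j (F : R * R -> R) : (1 <= i <= n)%N -> (1 <= j <= m)%N ->
  {within Erect, continuous F} -> {within Eij i j, continuous (fun p => F (Linv i j p))}.
Proof.
move=> ir jr /within_contP HF; apply/within_contP => p Hp e e0.
have pR : inR i j p by [].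
have [d1 d10 H1] := HF _ (Linv_E pR) e e0.
have [d2 d20 H2] := (iffLR (within_contP _ _) (Hgxc ir)) p.1 (proj1 Hp) d1 d10.
have [d3 d30 H3] := (iffLR (within_contP _ _) (Hgyc jr)) p.2 (proj2 Hp) d1 d10.
exists (Num.min d2 d3); first by rewrite lt_min d20 d30.
move=> p' Hp'; rewrite ballRR lt_min lt_min => -[/andP[h2 _] /andP[_ h3]].
apply: H1; first exact: (Linv_E (conj ir (conj jr Hp'))).
rewrite ballRR /=; split.
  by rewrite -ballR; apply: H2 (proj1 Hp') _; rewrite ballR.
by rewrite -ballR; apply: H3 (proj2 Hp') _; rewrite ballR.
Qed.

Lemma phi_cont i j f : (1 <= i <= n)%N -> (1 <= j <= m)%N ->
  {within Erect, continuous f} -> {within Eij i j, continuous (phi i j f)}.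
Proof.
move=> ir jr cf; rewrite /phi.
apply: cont_D; last exact: Hhcont.
apply: cont_M; first exact: Hscont.
exact: (cont_B (comp_Linv_cont ir jr cf) (comp_Linv_cont ir jr (Hgcont ir jr))).
Qed.

Lemma rect_sep (a b c d : R) p : ~ rect a b c d p ->
  exists2 del, 0 < del & forall p', ball p del p' -> ~ rect a b c d p'.
Proof.
move=> np.
have : (p.1 < a) \/ (b < p.1) \/ (p.2 < c) \/ (d < p.2).
  case: (ltP p.1 a) => h1; first by left.
  case: (ltP b p.1) => h2; first by right; left.
  case: (ltP p.2 c) => h3; first by right; right; left.
  case: (ltP d p.2) => h4; first by right; right; right.
  by exfalso; apply: np; split; apply/andP; split.
move=> [hh|[hh|[hh|hh]]].
- exists (a - p.1); first by rewrite subr_gt0.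
  move=> p'; rewrite ballRR !ltr_norml /rect /cint /= => -[/andP[h1 h2] _] [/andP [h3 _] _]; lra.
- exists (p.1 - b); first by rewrite subr_gt0.
  move=> p'; rewrite ballRR !ltr_norml /rect /cint /= => -[/andP[h1 h2] _] [/andP [_ h3] _]; lra.
- exists (c - p.2); first by rewrite subr_gt0.
  move=> p'; rewrite ballRR !ltr_norml /rect /cint /= => -[_ /andP[h1 h2]] [_ /andP [h3 _]]; lra.
- exists (p.2 - d); first by rewrite subr_gt0.
  move=> p'; rewrite ballRR !ltr_norml /rect /cint /= => -[_ /andP[h1 h2]] [_ /andP [_ h3]]; lra.
Qed.

Lemma T_cont f : {within Erect, continuous f} -> {within Erect, continuous (T f)}.
Proof.
move=> cf; apply/within_contP => p Ep e e0.
pose P i del := forall j, (j <= m)%N -> (1 <= i <= n)%N -> (1 <= j <= m)%N ->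
  (Eij i j p -> forall p', Eij i j p' -> ball p del p' -> `|phi i j f p - phi i j f p'| < e) /\
  (~ Eij i j p -> forall p', ball p del p' -> ~ Eij i j p').
have Pm : forall i del del', 0 < del' -> del' <= del -> P i del -> P i del'.
  move=> i del del' _ dd H j jm ir jr; have [H1 H2] := H j jm ir jr; split.
    by move=> Hp p' Hp' pp'; apply: H1 => //; apply: le_ball pp'.
  by move=> Hp p' pp'; apply: H2 => //; apply: le_ball pp'.
have [del del0 Hdel] : exists2 del, 0 < del & forall i, (i <= n)%N -> P i del.
  apply: fin_min => // i iN.
  pose Q j del := (1 <= i <= n)%N -> (1 <= j <= m)%N ->
    (Eij i j p -> forall p', Eij i j p' -> ball p del p' -> `|phi i j f p - phi i j f p'| < e) /\
    (~ Eij i j p -> forall p', ball p del p' -> ~ Eij i j p').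
  have [d d0 Hd] : exists2 d, 0 < d & forall j, (j <= m)%N -> Q j d.
    apply: fin_min.
      move=> j d d' _ dd H ir jr; have [H1 H2] := H ir jr; split.
        by move=> Hp p' Hp' pp'; apply: H1 => //; apply: le_ball pp'.
      by move=> Hp p' pp'; apply: H2 => //; apply: le_ball pp'.
    move=> j jm.
    case: (pselect ((1 <= i <= n)%N /\ (1 <= j <= m)%N)) => [[ir jr]|nr]; last first.
      by exists 1 => // ir jr; exfalso; apply: nr.
    case: (pselect (Eij i j p)) => Hp.
      have [d d0 Hd] := (iffLR (within_contP _ _) (phi_cont ir jr cf)) p Hp e e0.
      by exists d => // _ _; split => // _ p' Hp' pp'; apply: Hd.
    have [d d0 Hd] := rect_sep Hp.
    by exists d => // _ _; split => // _ p' pp'; apply: Hd.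
  by exists d => // j jm; apply: Hd.
exists del => // p' Ep' pp'.
have [i [j Hr]] := coverE Ep'.
have [ir [jr Hp']] := Hr.
have /andP [_ iN] := ir; have /andP [_ jm] := jr.
have [H1 H2] := Hdel i iN j jm ir jr.
have Hp : Eij i j p.
  by apply: contrapT => Hp; exact: (H2 Hp p' pp' Hp').
have Hr2 : inR i j p by split.
rewrite (T_eq f Hr) (T_eq f Hr2).
exact: H1.
Qed.
Lemma T_contr f1 f2 B : (forall p, Erect p -> `|f1 p - f2 p| <= B) ->
  forall p, Erect p -> `|T f1 p - T f2 p| <= sig * B.
Proof.
move=> HB p Ep; have Hr := idxP Ep.
rewrite (T_eq f1 Hr) (T_eq f2 Hr) /phi.
set v := Linv _ _ p.
have -> : s (idx p).1 (idx p).2 p * (f1 v - g (idx p).1 (idx p).2 v) + h (idx p).1 (idx p).2 p -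
  (s (idx p).1 (idx p).2 p * (f2 v - g (idx p).1 (idx p).2 v) + h (idx p).1 (idx p).2 p) =
  s (idx p).1 (idx p).2 p * (f1 v - f2 v) by ring.
rewrite normrM; apply: ler_pM => //; first exact: Hsig.
exact: HB (Linv_E Hr).
Qed.

Lemma xE0 : x 0 <= x n.
Proof. exact: (@part_le _ _ _ Hx 0 n (leq0n n) (leqnn n)). Qed.
Lemma yE0 : y 0 <= y m.
Proof. exact: (@part_le _ _ _ Hy 0 m (leq0n m) (leqnn m)). Qed.

Definition fk k := iter k T (fun _ => 0).

Lemma fk_cont k : {within Erect, continuous (fk k)}.
Proof.
elim: k => [|k IH] /=; last exact: T_cont.
by apply: continuous_subspaceT; exact: cst_continuous.
Qed.

Lemma M0_ex : exists M0, 0 <= M0 /\ forall p, Erect p -> `|fk 1 p - fk 0 p| <= M0.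
Proof.
have [M HM] := rect_bound xE0 yE0 (cont_B (@fk_cont 1) (@fk_cont 0)).
exists M; split => //.
have : Erect (x 0, y 0) by split; apply/andP; split; rewrite /= ?lexx ?xE0 ?yE0.
by move/HM; apply: le_trans.
Qed.

Definition M0 := projT1 (cid M0_ex).
Lemma M0_ge0 : 0 <= M0.
Proof. exact: (proj1 (projT2 (cid M0_ex))). Qed.
Lemma M0P p : Erect p -> `|fk 1 p - fk 0 p| <= M0.
Proof. exact: (proj2 (projT2 (cid M0_ex))). Qed.

Lemma fk_step k p : Erect p -> `|fk k.+1 p - fk k p| <= M0 * sig ^+ k.
Proof.
elim: k p => [|k IH] p Ep; first by rewrite expr0 mulr1; exact: M0P.
have := T_contr IH Ep; rewrite exprS mulrCA; exact.
Qed.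

Definition C := M0 / (1 - sig).
Lemma C_ge0 : 0 <= C.
Proof. by rewrite /C divr_ge0 ?M0_ge0 // subr_ge0 ltW. Qed.

Lemma fk_diff k j p : Erect p -> `|fk (k + j) p - fk k p| <= C * (sig ^+ k - sig ^+ (k + j)).
Proof.
move=> Ep; elim: j => [|j IH]; first by rewrite addn0 !subrr normr0 mulr0.
have h1 := fk_step (k + j) Ep.
have eM : M0 = C * (1 - sig) by rewrite /C; field; rewrite subr_eq0 gt_eqF.
rewrite eM in h1.
rewrite addnS.
have -> : fk (k + j).+1 p - fk k p = (fk (k + j).+1 p - fk (k + j) p) + (fk (k + j) p - fk k p) by ring.
apply: le_trans (ler_normD _ _) _.
have -> : C * (sig ^+ k - sig ^+ (k + j).+1) = C * (1 - sig) * sig ^+ (k + j) + C * (sig ^+ k - sig ^+ (k + j)).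
  by rewrite exprS; ring.
by apply: lerD.
Qed.

Definition bk k p := fk k p - C * sig ^+ k.
Definition ff p := sup (range (fun k => bk k p)).

Lemma bk_le k j p : Erect p -> bk j p <= fk k p + C * sig ^+ k.
Proof.
move=> Ep; rewrite /bk.
have C0 := C_ge0.
have sk : 0 <= C * sig ^+ k by rewrite mulr_ge0 // exprn_ge0.
have sj : 0 <= C * sig ^+ j by rewrite mulr_ge0 // exprn_ge0.
case: (leqP k j) => kj.
  have := @fk_diff k (j - k) p Ep; rewrite subnKC // mulrBr => /ler_normlP [_ H].
  exact: arith1.
have := @fk_diff j (k - j) p Ep; rewrite (subnKC (ltnW kj)) mulrBr => /ler_normlP [H _].
exact: (arith2 H sk).
Qed.

Lemma ffP k p : Erect p -> `|ff p - fk k p| <= C * sig ^+ k.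
Proof.
move=> Ep.
have ne : range (fun k => bk k p) !=set0 by exists (bk 0 p), 0%N.
have ub : ubound (range (fun k => bk k p)) (fk k p + C * sig ^+ k).
  by move=> _ [j _ <-]; exact: bk_le.
have hs : has_sup (range (fun k => bk k p)) by split => //; exists (fk k p + C * sig ^+ k).
have h1 : ff p <= fk k p + C * sig ^+ k by apply: ge_sup.
have h2 : bk k p <= ff p by apply: sup_upper_bound => //; exists k.
exact: arith3.
Qed.
Lemma ff_cont : {within Erect, continuous ff}.
Proof.
apply/within_contP => p Ep e e0.
have e3 : 0 < e / 3 by rewrite divr_gt0.
have C1 : 0 < C + 1 by rewrite ltr_wpDl // C_ge0.
have [k hk] := ex_pow_lt Hsig0 Hsig1 (divr_gt0 e3 C1).
have Ck : C * sig ^+ k < e / 3.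
  have hh : C * sig ^+ k <= (C + 1) * sig ^+ k by rewrite ler_wpM2r ?exprn_ge0 // lerDl.
  apply: le_lt_trans hh _.
  by rewrite mulrC -ltr_pdivlMr.
have [d d0 Hd] := (iffLR (within_contP _ _) (@fk_cont k)) p Ep (e / 3) e3.
exists d => // p' Ep' pp'.
have := arith4 (ffP k Ep) (Hd p' Ep' pp') (ffP k Ep') Ck.
by rewrite mulrC mulrCA mulfV ?mulr1.
Qed.

Lemma ff_fix p : Erect p -> T ff p = ff p.
Proof.
move=> Ep; apply/eqP; rewrite -subr_eq0; apply/eqP.
apply: (pow_zero (D := 2 * C)) Hsig0 Hsig1 _ => k.
have h1 := T_contr (fun q Eq => @ffP k q Eq) Ep.
have h2 := @ffP k.+1 p Ep.
have := arith5 h1 h2.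
have X0 : 0 <= C * sig ^+ k by rewrite mulr_ge0 ?C_ge0 ?exprn_ge0.
move/le_trans; apply.
rewrite exprS mulrCA mulr2n mulrDl mul1r.
rewrite mulrDl [C * (sig * _)]mulrCA.
by apply: lerD; apply: ler_piMl => //; apply: ltW.
Qed.

Lemma ff_bound p : Erect p -> `|ff p| <= C.
Proof. by move=> Ep; have := @ffP 0 p Ep; rewrite expr0 mulr1 /fk /= subr0. Qed.

Lemma W_eq i j a : (1 <= i <= n)%N -> (1 <= j <= m)%N -> Erect a.1 ->
  Wmap Lx Ly s g h i j a = (Lmap Lx Ly i j a.1,
     s i j (Lmap Lx Ly i j a.1) * (a.2 - ff a.1) + ff (Lmap Lx Ly i j a.1)).
Proof.
move=> ir jr Ea; rewrite /Wmap; congr pair.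
have HL := L_inR ir jr Ea.
rewrite -(ff_fix (inR_E HL)).
rewrite (T_eq ff HL) /phi /Lmap Linv_L // /Fmap /Qmap /Lmap; ring.
Qed.

Lemma graph_inv : graph_on Erect ff = hutchinson n m Lx Ly s g h (graph_on Erect ff).
Proof.
apply/seteqP; split.
- move=> w [Ew1 Ew2].
  have [i [j Hr]] := coverE Ew1.
  have [ir [jr _]] := Hr.
  exists i, j; do 2!split => //.
  exists (Linv i j w.1, ff (Linv i j w.1)); split.
    by split => //; exact: Linv_E Hr.
  rewrite W_eq //=; last exact: Linv_E Hr.
  rewrite subrr mulr0 add0r /Lmap L_Linv //.
  by case: w Ew1 Ew2 {Hr} => ? ? /= _ ->.
- move=> w [i [j [ir [jr [a [[Ea1 Ea2] ->]]]]]].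
  rewrite W_eq // Ea2 subrr mulr0 add0r; split => //=.
  exact: inR_E (L_inR ir jr Ea1).
Qed.
Lemma uniq_sub A : compact A -> A `<=` Erect `*` setT ->
  A `<=` hutchinson n m Lx Ly s g h A -> A `<=` graph_on Erect ff.
Proof.
move=> cA AE AH.
case: (pselect (A !=set0)) => [A0|nA]; last first.
  by move=> w Aw; exfalso; apply: nA; exists w.
have cont2 : {within A, continuous (fun w : (R * R) * R => `|w.2|)}.
  apply/within_contP => w Aw e e0; exists e => // w' Aw'; rewrite ballT3 => -[_ hw].
  exact: le_lt_trans (ler_dist_dist _ _) hw.
have [c _ Hc] := compact_EVT_max A0 cA cont2.
have key : forall k w, A w -> `|w.2 - ff w.1| <= (`|c.2| + C) * sig ^+ k.
  elim => [|k IH] w Aw.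
    rewrite expr0 mulr1; apply: arith8; first by apply: Hc; rewrite inE.
    exact: ff_bound (proj1 (AE w Aw)).
  have [i [j [ir [jr [a [Aa ->]]]]]] := AH w Aw.
  have Ea : Erect a.1 := proj1 (AE a Aa).
  rewrite W_eq //= addrK normrM exprS mulrCA.
  apply: ler_pM => //; first exact: Hsig (L_inR ir jr Ea).
  exact: IH.
move=> w Aw; split; first exact: (proj1 (AE w Aw)).
apply/eqP; rewrite -subr_eq0; apply/eqP.
exact: (pow_zero Hsig0 Hsig1 (fun k => key k w Aw)).
Qed.

Lemma graph_sub A : closed A -> A !=set0 -> A `<=` graph_on Erect ff ->
  hutchinson n m Lx Ly s g h A `<=` A -> graph_on Erect ff `<=` A.
Proof.
move=> clA [a0 Aa0] AG HA.
pose Dx := x n - x 0; pose Dy := y m - y 0.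
have approx : forall k p, Erect p -> exists a, A a /\ `|a.1.1 - p.1| <= cL ^+ k * Dx /\
    `|a.1.2 - p.2| <= cL ^+ k * Dy.
  elim => [|k IH] p Ep.
    exists a0; have [[Ea1 Ea2] _] := AG a0 Aa0.
    rewrite !expr0 !mul1r; split => //; split; apply: arith6 => //.
      exact: (proj1 Ep).
    exact: (proj2 Ep).
  have [i [j Hr]] := coverE Ep.
  have [ir [jr _]] := Hr.
  have Ev := Linv_E Hr.
  have [a [Aa [h1 h2]]] := IH _ Ev.
  have [Ea _] := AG a Aa.
  exists (Wmap Lx Ly s g h i j a); split.
    by apply: HA; exists i, j; do 2!split => //; exists a.
  have Hp : p = (Lx i (Linv i j p).1, Ly j (Linv i j p).2) by rewrite L_Linv.
  rewrite [in X in `|_ - X.1|]Hp [in X in `|_ - X.2|]Hp /= !exprS -!mulrA.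
  split.
    apply: le_trans (HcLx ir (proj1 Ea) (proj1 Ev)) _.
    by apply: ler_wpM2l.
  apply: le_trans (HcLy jr (proj2 Ea) (proj2 Ev)) _.
  by apply: ler_wpM2l.
have Dx0 : 0 <= Dx by rewrite subr_ge0 xE0.
have Dy0 : 0 <= Dy by rewrite subr_ge0 yE0.
move=> w [Ew1 Ew2]; apply: clA; apply: closure_ballP => e e0.
have [d d0 Hd] := (iffLR (within_contP _ _) ff_cont) w.1 Ew1 e e0.
have t0 : 0 < Num.min d e by rewrite lt_min d0 e0.
have K0 : 0 < Dx + Dy + 1 by rewrite ltr_wpDl // addr_ge0.
have [k hk] := ex_pow_lt HcL0 HcL1 (divr_gt0 t0 K0).
rewrite ltr_pdivlMr // in hk.
have ck : 0 <= cL ^+ k by rewrite exprn_ge0.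
have hx : cL ^+ k * Dx < Num.min d e.
  apply: le_lt_trans hk; rewrite ler_wpM2l //; lra.
have hy : cL ^+ k * Dy < Num.min d e.
  apply: le_lt_trans hk; rewrite ler_wpM2l //; lra.
have [a [Aa [h1 h2]]] := approx k w.1 Ew1.
have [Ea1 Ea2] := AG a Aa.
have l1 : `|w.1.1 - a.1.1| < Num.min d e by rewrite distrC; apply: le_lt_trans hx.
have l2 : `|w.1.2 - a.1.2| < Num.min d e by rewrite distrC; apply: le_lt_trans hy.
move: l1 l2; rewrite !lt_min => /andP [l1d l1e] /andP [l2d l2e].
exists a; split => //; rewrite ballT3; split; first by split.
rewrite Ew2 Ea2; apply: Hd => //; rewrite ballRR; split.
Qed.
Lemma main_result : exists f : R * R -> R,
    {within rect (x 0) (x n) (y 0) (y m), continuous f} /\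
    graph_on (rect (x 0) (x n) (y 0) (y m)) f =
      hutchinson n m Lx Ly s g h (graph_on (rect (x 0) (x n) (y 0) (y m)) f) /\
    (forall A : set ((R * R) * R),
       compact A -> A !=set0 -> A `<=` rect (x 0) (x n) (y 0) (y m) `*` setT ->
       A = hutchinson n m Lx Ly s g h A ->
       A = graph_on (rect (x 0) (x n) (y 0) (y m)) f).
Proof.
exists ff; split; first exact: ff_cont.
split; first exact: graph_inv.
move=> A cA A0 AE AH.
have sub := uniq_sub cA AE (_ : A `<=` hutchinson n m Lx Ly s g h A).
have sub' : A `<=` graph_on Erect ff by apply: sub; rewrite -AH.
apply/seteqP; split => //.
apply: graph_sub => //; first by apply: compact_closed => //; exact: hT3.
by rewrite -AH.
Qed.
End Main.

Theorem theorem1 (R : realType) (n m : nat) (x y : nat -> R) (z : nat -> nat -> R)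
  (Lx Ly : nat -> R -> R) (q r : nat -> R -> R)
  (s g h : nat -> nat -> R * R -> R) :
  (1 <= n)%N -> (1 <= m)%N ->
  (forall i, (i < n)%N -> x i < x i.+1) ->
  (forall j, (j < m)%N -> y j < y j.+1) ->
  (forall i, (1 <= i <= n)%N ->
     homeo_on (cint (x 0%N) (x n)) (cint (x i.-1) (x i)) (Lx i) /\
     contraction_on (cint (x 0%N) (x n)) (Lx i) /\
     Lx i @` [set x 0%N; x n] = [set x i.-1; x i]) ->
  (forall j, (1 <= j <= m)%N ->
     homeo_on (cint (y 0%N) (y m)) (cint (y j.-1) (y j)) (Ly j) /\
     contraction_on (cint (y 0%N) (y m)) (Ly j) /\
     Ly j @` [set y 0%N; y m] = [set y j.-1; y j]) ->
  (forall a, (a <= n)%N ->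
     {within cint (y 0%N) (y m), continuous (q a)} /\
     forall l, (l <= m)%N -> q a (y l) = z a l) ->
  (forall b, (b <= m)%N ->
     {within cint (x 0%N) (x n), continuous (r b)} /\
     forall k, (k <= n)%N -> r b (x k) = z k b) ->
  (forall i j, (1 <= i <= n)%N -> (1 <= j <= m)%N ->
     let Eij := rect (x i.-1) (x i) (y j.-1) (y j) in
     lipschitz2_on Eij (s i j) /\
     (forall p, Eij p -> `|s i j p| < 1) /\
     (forall t, cint (y j.-1) (y j) t ->
        s i j (x i.-1, t) = 0 /\ s i j (x i, t) = 0) /\
     (forall t, cint (x i.-1) (x i) t ->
        s i j (t, y j.-1) = 0 /\ s i j (t, y j) = 0) /\
     lipschitz2_on (rect (x 0%N) (x n) (y 0%N) (y m)) (g i j) /\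
     lipschitz2_on Eij (h i j) /\
     (forall t, cint (y j.-1) (y j) t ->
        h i j (x i.-1, t) = q i.-1 t /\ h i j (x i, t) = q i t) /\
     (forall t, cint (x i.-1) (x i) t ->
        h i j (t, y j.-1) = r j.-1 t /\ h i j (t, y j) = r j t)) ->
  let E := rect (x 0%N) (x n) (y 0%N) (y m) in
  exists f : R * R -> R,
    {within E, continuous f} /\
    graph_on E f = hutchinson n m Lx Ly s g h (graph_on E f) /\
    (forall A : set ((R * R) * R),
       compact A -> A !=set0 -> A `<=` E `*` setT ->
       A = hutchinson n m Lx Ly s g h A ->
       A = graph_on E f).
Proof.
move=> Hn Hm Hx Hy HLx HLy _ _ Hij E.
pose PX i (gi : R -> R) := (1 <= i <= n)%N ->
    {within cint (x i.-1) (x i), continuous gi} /\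
    (forall a, cint (x 0) (x n) a -> cint (x i.-1) (x i) (Lx i a)) /\
    (forall b, cint (x i.-1) (x i) b -> cint (x 0) (x n) (gi b)) /\
    (forall a, cint (x 0) (x n) a -> gi (Lx i a) = a) /\
    (forall b, cint (x i.-1) (x i) b -> Lx i (gi b) = b).
have [gx Hgx] : {gx : nat -> R -> R & forall i, PX i (gx i)}.
  apply: choice => i; rewrite /PX.
  case: (boolP (1 <= i <= n)%N) => ir; last by exists (fun t => t).
  have [[_ [gi [c1 [c2 [c3 [c4 c5]]]]]] _] := HLx i ir.
  by exists gi.
pose PY j (gj : R -> R) := (1 <= j <= m)%N ->
    {within cint (y j.-1) (y j), continuous gj} /\
    (forall a, cint (y 0) (y m) a -> cint (y j.-1) (y j) (Ly j a)) /\
    (forall b, cint (y j.-1) (y j) b -> cint (y 0) (y m) (gj b)) /\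
    (forall a, cint (y 0) (y m) a -> gj (Ly j a) = a) /\
    (forall b, cint (y j.-1) (y j) b -> Ly j (gj b) = b).
have [gy Hgy] : {gy : nat -> R -> R & forall j, PY j (gy j)}.
  apply: choice => j; rewrite /PY.
  case: (boolP (1 <= j <= m)%N) => jr; last by exists (fun t => t).
  have [[_ [gj [c1 [c2 [c3 [c4 c5]]]]]] _] := HLy j jr.
  by exists gj.
have [cx [cx0 [cx1 Hcx]]] : exists c : R, 0 <= c /\ c < 1 /\ forall i, (i <= n)%N ->
    (1 <= i <= n)%N -> forall a b, cint (x 0) (x n) a -> cint (x 0) (x n) b ->
    `|Lx i a - Lx i b| <= c * `|a - b|.
  apply: fin_max.
    move=> i c c' cc' H ir a b Ha Hb; apply: le_trans (H ir a b Ha Hb) _.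
    by rewrite ler_wpM2r.
  move=> i _; case: (boolP (1 <= i <= n)%N) => ir; last first.
    by exists 0; rewrite lexx ltr01; split => //; split => //; rewrite ir.
  have [_ [[c [c0 [c1 Hc]]] _]] := HLx i ir.
  by exists c; do 2!split => //.
have [cy [cy0 [cy1 Hcy]]] : exists c : R, 0 <= c /\ c < 1 /\ forall j, (j <= m)%N ->
    (1 <= j <= m)%N -> forall a b, cint (y 0) (y m) a -> cint (y 0) (y m) b ->
    `|Ly j a - Ly j b| <= c * `|a - b|.
  apply: fin_max.
    move=> j c c' cc' H jr a b Ha Hb; apply: le_trans (H jr a b Ha Hb) _.
    by rewrite ler_wpM2r.
  move=> j _; case: (boolP (1 <= j <= m)%N) => jr; last first.
    by exists 0; rewrite lexx ltr01; split => //; split => //; rewrite jr.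
  have [_ [[c [c0 [c1 Hc]]] _]] := HLy j jr.
  by exists c; do 2!split => //.
pose cL := Num.max cx cy.
have cL0 : 0 <= cL by rewrite le_max cx0.
have cL1 : cL < 1 by rewrite gt_max cx1 cy1.
have [sig [sig0 [sig1 Hsig]]] : exists c : R, 0 <= c /\ c < 1 /\ forall i, (i <= n)%N ->
    forall j, (j <= m)%N -> (1 <= i <= n)%N -> (1 <= j <= m)%N ->
    forall p, rect (x i.-1) (x i) (y j.-1) (y j) p -> `|s i j p| <= c.
  apply: fin_max.
    move=> i c c' cc' H j jm ir jr p Hp; exact: le_trans (H j jm ir jr p Hp) cc'.
  move=> i iN; apply: fin_max.
    move=> j c c' cc' H ir jr p Hp; exact: le_trans (H ir jr p Hp) cc'.
  move=> j jm.
  case: (boolP ((1 <= i <= n) && (1 <= j <= m))%N) => /andP; last first.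
    move=> nr; exists 0; rewrite lexx ltr01; split => //; split => // ir jr.
    by exfalso; apply: nr; rewrite ir jr.
  move=> [ir jr].
  have [Ls [sl1 _]] := Hij i j ir jr.
  have xl : x i.-1 <= x i by apply: (@part_le _ _ _ Hx i.-1 i); lia.
  have yl : y j.-1 <= y j by apply: (@part_le _ _ _ Hy j.-1 j); lia.
  have [p0 Hp0 Hmax] := rect_max xl yl (cont_norm (lip_cont Ls)).
  exists `|s i j p0|; split => //; split; first exact: sl1.
  by move=> _ _ p Hp; apply: Hmax.
have HLx' : forall i, (1 <= i <= n)%N -> forall t, cint (x 0) (x n) t -> cint (x i.-1) (x i) (Lx i t).
  by move=> i ir; case: (Hgx i ir) => _ [? _].
have Hgx' : forall i, (1 <= i <= n)%N -> forall t, cint (x i.-1) (x i) t -> cint (x 0) (x n) (gx i t).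
  by move=> i ir; case: (Hgx i ir) => _ [_ [? _]].
have HLgx : forall i, (1 <= i <= n)%N -> forall t, cint (x i.-1) (x i) t -> Lx i (gx i t) = t.
  by move=> i ir; case: (Hgx i ir) => _ [_ [_ [_ ?]]].
have HgLx : forall i, (1 <= i <= n)%N -> forall t, cint (x 0) (x n) t -> gx i (Lx i t) = t.
  by move=> i ir; case: (Hgx i ir) => _ [_ [_ [? _]]].
have Hgxc : forall i, (1 <= i <= n)%N -> {within cint (x i.-1) (x i), continuous (gx i)}.
  by move=> i ir; case: (Hgx i ir).
have HcLx : forall i, (1 <= i <= n)%N -> forall a b, cint (x 0) (x n) a -> cint (x 0) (x n) b ->
  `|Lx i a - Lx i b| <= cL * `|a - b|.
  move=> i ir a b Ha Hb; have /andP [_ iN] := ir.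
  apply: le_trans (Hcx i iN ir a b Ha Hb) _.
  by rewrite ler_wpM2r // le_max lexx.
have HLy' : forall j, (1 <= j <= m)%N -> forall t, cint (y 0) (y m) t -> cint (y j.-1) (y j) (Ly j t).
  by move=> j jr; case: (Hgy j jr) => _ [? _].
have Hgy' : forall j, (1 <= j <= m)%N -> forall t, cint (y j.-1) (y j) t -> cint (y 0) (y m) (gy j t).
  by move=> j jr; case: (Hgy j jr) => _ [_ [? _]].
have HLgy : forall j, (1 <= j <= m)%N -> forall t, cint (y j.-1) (y j) t -> Ly j (gy j t) = t.
  by move=> j jr; case: (Hgy j jr) => _ [_ [_ [_ ?]]].
have HgLy : forall j, (1 <= j <= m)%N -> forall t, cint (y 0) (y m) t -> gy j (Ly j t) = t.
  by move=> j jr; case: (Hgy j jr) => _ [_ [_ [? _]]].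
have Hgyc : forall j, (1 <= j <= m)%N -> {within cint (y j.-1) (y j), continuous (gy j)}.
  by move=> j jr; case: (Hgy j jr).
have HcLy : forall j, (1 <= j <= m)%N -> forall a b, cint (y 0) (y m) a -> cint (y 0) (y m) b ->
  `|Ly j a - Ly j b| <= cL * `|a - b|.
  move=> j jr a b Ha Hb; have /andP [_ jm] := jr.
  apply: le_trans (Hcy j jm jr a b Ha Hb) _.
  by rewrite ler_wpM2r // le_max lexx orbT.
have Hsig' : forall i j p, inR n m x y i j p -> `|s i j p| <= sig.
  move=> i j p [ir [jr Hp]]; have /andP [_ iN] := ir; have /andP [_ jm] := jr.
  exact: Hsig i iN j jm ir jr p Hp.
have Hscont : forall i j, (1 <= i <= n)%N -> (1 <= j <= m)%N ->
    {within Eij x y i j, continuous (s i j)}.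
  by move=> i j ir jr; have [? _] := Hij i j ir jr; exact: lip_cont.
have Hhcont : forall i j, (1 <= i <= n)%N -> (1 <= j <= m)%N ->
    {within Eij x y i j, continuous (h i j)}.
  by move=> i j ir jr; have [_ [_ [_ [_ [_ [? _]]]]]] := Hij i j ir jr; exact: lip_cont.
have Hgcont : forall i j, (1 <= i <= n)%N -> (1 <= j <= m)%N ->
    {within Erect n m x y, continuous (g i j)}.
  by move=> i j ir jr; have [_ [_ [_ [_ [? _]]]]] := Hij i j ir jr; exact: lip_cont.
have Hsx : forall i j, (1 <= i <= n)%N -> (1 <= j <= m)%N -> forall t, cint (y j.-1) (y j) t ->
    s i j (x i.-1, t) = 0 /\ s i j (x i, t) = 0.
  by move=> i j ir jr; have [_ [_ [? _]]] := Hij i j ir jr.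
have Hsy : forall i j, (1 <= i <= n)%N -> (1 <= j <= m)%N -> forall t, cint (x i.-1) (x i) t ->
    s i j (t, y j.-1) = 0 /\ s i j (t, y j) = 0.
  by move=> i j ir jr; have [_ [_ [_ [? _]]]] := Hij i j ir jr.
have Hhx : forall i j, (1 <= i <= n)%N -> (1 <= j <= m)%N -> forall t, cint (y j.-1) (y j) t ->
    h i j (x i.-1, t) = q i.-1 t /\ h i j (x i, t) = q i t.
  by move=> i j ir jr; have [_ [_ [_ [_ [_ [_ [? _]]]]]]] := Hij i j ir jr.
have Hhy : forall i j, (1 <= i <= n)%N -> (1 <= j <= m)%N -> forall t, cint (x i.-1) (x i) t ->
    h i j (t, y j.-1) = r j.-1 t /\ h i j (t, y j) = r j t.
  by move=> i j ir jr; have [_ [_ [_ [_ [_ [_ [_ ?]]]]]]] := Hij i j ir jr.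
exact: (main_result Hn Hm Hx Hy HLx' Hgx' HLgx HgLx Hgxc HcLx HLy' Hgy' HLgy HgLy Hgyc HcLy
  cL0 cL1 sig0 sig1 Hsig' Hscont Hhcont Hgcont Hsx Hsy Hhx Hhy).
Qed.
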